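(* Let $\mathcal{A}$ and $\mathcal{U}$ be Banach algebras, $\theta$ a nonzero character on $\mathcal{A}$, $\mathcal{X}$ a Banach $(\mathcal{A}\times_{\theta}\mathcal{U})$-bimodule, and $D:\mathcal{A}\times_{\theta}\mathcal{U}\to\mathcal{X}$ a derivation; let $\delta_1(a)=D((a,0))$ and $\delta_2(u)=D((0,u))$. Then: (i) if $\mathrm{ann}_{\mathcal{X}}\mathcal{U}=\{0\}$, or $\mathcal{U}$ has a left (or right) bounded approximate identity for $\mathcal{X}$, then $\delta_1$ is continuous; (ii) if $Z_{\mathcal{X}}(\mathcal{A})=\{0\}$, then $\delta_2:\mathcal{U}\to\mathcal{X}$ is continuous; if in addition $\mathrm{ann}_{\mathcal{X}}\mathcal{U}=\{0\}$, then every derivation $D:\mathcal{A}\times_{\theta}\mathcal{U}\to\mathcal{X}$ is continuous.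
   Context: The Lau product $\mathcal{A}\times_{\theta}\mathcal{U}$ is $\mathcal{A}\times\mathcal{U}$ with norm $\|(a,u)\|=\|a\|+\|u\|$ and product $(a,u)(a',u')=(aa',\theta(a)u'+\theta(a')u+uu')$. A Banach $(\mathcal{A}\times_{\theta}\mathcal{U})$-bimodule $\mathcal{X}$ is an $\mathcal{A}$-bimodule via $ax=(a,0)x$, $xa=x(a,0)$ and a $\mathcal{U}$-bimodule via $ux=(0,u)x$, $xu=x(0,u)$. $\mathrm{ann}_{\mathcal{X}}\mathcal{U}=\{x: ux=xu=0\ \forall u\in\mathcal{U}\}$; $Z_{\mathcal{X}}(\mathcal{A})=\{x: ax=xa\ \forall a\in\mathcal{A}\}$. A left (resp. right) bounded approximate identity for $\mathcal{X}$ in $\mathcal{U}$ is a bounded net $(e_\alpha)\subseteq\mathcal{U}$ with $e_\alpha x\to x$ (resp. $xe_\alpha\to x$) for all $x\in\mathcal{X}$. *)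

(* Defs.v *)
From mathcomp Require Import all_boot all_order all_algebra.
From mathcomp Require Export complex.
From mathcomp Require Export all_classical all_reals all_analysis.
Export numFieldNormedType.Exports.
Import Order.TTheory GRing.Theory Num.Theory.

Set Implicit Arguments.
Unset Strict Implicit.
Unset Printing Implicit Defensive.

Local Open Scope ring_scope.

Section LauDefs.
Context {R : realType}.
Local Notation C := (R[i]).

Definition is_banach_algebra (A : completeNormedModType C) (mul : A -> A -> A) : Prop :=
  associative mul /\
  (forall (c : C) a b, mul (c *: a) b = c *: mul a b) /\
  (forall (c : C) a b, mul a (c *: b) = c *: mul a b) /\
  left_distributive mul +%R /\
  right_distributive mul +%R /\
  (forall a b, `|mul a b| <= `|a| * `|b|).

Definition is_nonzero_character (A : completeNormedModType C) (mul : A -> A -> A)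
    (theta : A -> C) : Prop :=
  [/\ forall (c : C) a b, theta (c *: a + b) = c * theta a + theta b,
      forall a b, theta (mul a b) = theta a * theta b &
      exists a, theta a != 0 ].

Section Lau.
Variables (A U : completeNormedModType C) (mulA : A -> A -> A) (mulU : U -> U -> U)
  (theta : A -> C).

Definition lau_mul (p q : A * U) : A * U :=
  (mulA p.1 q.1, theta p.1 *: q.2 + theta q.1 *: p.2 + mulU p.2 q.2).

Definition lau_norm (p : A * U) : C := `|p.1| + `|p.2|.

Definition lau_lc (c : C) (p q : A * U) : A * U := (c *: p.1 + q.1, c *: p.2 + q.2).

Variables (X : completeNormedModType C) (lact : A * U -> X -> X) (ract : X -> A * U -> X).

Definition is_lau_banach_bimodule : Prop :=
  (forall (c : C) p q x, lact (lau_lc c p q) x = c *: lact p x + lact q x) /\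
      (forall (c : C) p x y, lact p (c *: x + y) = c *: lact p x + lact p y) /\
      (forall (c : C) p q x, ract x (lau_lc c p q) = c *: ract x p + ract x q) /\
      (forall (c : C) p x y, ract (c *: x + y) p = c *: ract x p + ract y p) /\
      (forall p q x, lact (lau_mul p q) x = lact p (lact q x)) /\
      (forall p q x, ract x (lau_mul p q) = ract (ract x p) q) /\
      (forall p q x, lact p (ract x q) = ract (lact p x) q) /\
      (forall p x, `|lact p x| <= lau_norm p * `|x|) /\
      (forall p x, `|ract x p| <= lau_norm p * `|x|).

Definition is_lau_derivation (D : A * U -> X) : Prop :=
  (forall (c : C) p q, D (lau_lc c p q) = c *: D p + D q) /\
  (forall p q, D (lau_mul p q) = ract (D p) q + lact p (D q)).

Definition ann_X_U (x : X) : Prop :=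
  forall u : U, lact (0, u) x = 0 /\ ract x (0, u) = 0.

Definition Z_X_A (x : X) : Prop :=
  forall a : A, lact (a, 0) x = ract x (a, 0).

Definition directed_set (I : Type) (le : I -> I -> Prop) : Prop :=
  [/\ inhabited I,
      forall i, le i i,
      forall i j k, le i j -> le j k -> le i k &
      forall i j, exists k, le i k /\ le j k ].

Definition has_left_bai_for_X : Prop :=
  exists (I : Type) (le : I -> I -> Prop) (e : I -> U),
    [/\ directed_set le,
        exists M : C, forall i, `|e i| <= M &
        forall (x : X) (eps : C), 0 < eps ->
          exists i0, forall i, le i0 i -> `|lact (0, e i) x - x| < eps ].

Definition has_right_bai_for_X : Prop :=
  exists (I : Type) (le : I -> I -> Prop) (e : I -> U),
    [/\ directed_set le,
        exists M : C, forall i, `|e i| <= M &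
        forall (x : X) (eps : C), 0 < eps ->
          exists i0, forall i, le i0 i -> `|ract x (0, e i) - x| < eps ].

End Lau.
End LauDefs.

(* Main.v *)
From HB Require Import structures.
Require Import Defs.
From mathcomp Require Import all_boot all_order all_algebra.
From mathcomp Require Import complex.
From mathcomp Require Import all_classical all_reals all_analysis.
From Stdlib Require Import Classical_Prop.
From mathcomp Require Import ring lra.
Import numFieldNormedType.Exports.
Import Order.TTheory GRing.Theory Num.Theory Num.Def.
Local Open Scope ring_scope.
Local Open Scope classical_set_scope.
Local Open Scope complex_scope.
Local Open Scope ring_scope.
Section Realif.
Variable R : realType.
Lemma normC_R (r : R) : `|r%:C| = `|r|%:C.
Proof. by rewrite normc_def /= expr0n addr0 sqrtr_sqr. Qed.
Lemma normRe (z : R[i]) : `|z| = (complex.Re `|z|)%:C.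
Proof. by rewrite RRe_real // normr_real. Qed.

Lemma rcM (a b : R) : (a * b)%:C = a%:C * b%:C :> R[i].
Proof. by rewrite rmorphM. Qed.
Lemma rcD (a b : R) : (a + b)%:C = a%:C + b%:C :> R[i].
Proof. by rewrite rmorphD. Qed.
Lemma posC (e : R[i]) : 0 < e -> e = (complex.Re e)%:C /\ 0 < complex.Re e.
Proof.
move=> e0; have er : e \is Num.real by rewrite realE ltW.
by split; [rewrite RRe_real | rewrite -ltcR RRe_real].
Qed.

Variable V : completeNormedModType R[i].
Definition RV : Type := V.
HB.instance Definition _ := GRing.Zmodule.on RV.
HB.instance Definition _ := Choice.on RV.
Definition rscale (r : R) (v : RV) : RV := (r%:C : R[i]) *: (v : V).
Lemma rscaleA a b v : rscale a (rscale b v) = rscale (a * b) v.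
Proof. by rewrite /rscale scalerA -rcM. Qed.
Lemma rscale1 : left_id 1 rscale.
Proof. by move=> v; rewrite /rscale scale1r. Qed.
Lemma rscaleDr : right_distributive rscale +%R.
Proof. by move=> a u v; rewrite /rscale scalerDr. Qed.
Lemma rscaleDl v : {morph rscale^~ v : a b / a + b}.
Proof. by move=> a b; rewrite /rscale rcD scalerDl. Qed.
HB.instance Definition _ := GRing.Zmodule_isLmodule.Build R RV rscaleA rscale1 rscaleDr rscaleDl.
Definition rnorm (v : RV) : R := complex.Re `|v : V|.
Lemma rnormE (v : V) : `|v| = (rnorm v)%:C.
Proof. by rewrite /rnorm RRe_real // realE normr_ge0. Qed.
Lemma rnormD x y : rnorm (x + y) <= rnorm x + rnorm y.
Proof. rewrite -lecR rcD -!rnormE. exact: (@ler_normD _ V x y). Qed.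
Lemma rnormZ (l : R) (x : RV) : rnorm (l *: x) = `|l| * rnorm x.
Proof. by apply: complexI; rewrite rcM -!rnormE -normC_R -normrZ. Qed.
Lemma rnorm0 (x : RV) : rnorm x = 0 -> x = 0.
Proof. by move=> h; apply/eqP; rewrite -normr_eq0 rnormE h. Qed.
HB.instance Definition _ := Lmodule_isNormed.Build R RV rnormD rnormZ rnorm0.

Lemma RV_normE (x : RV) : `|x| = rnorm x.
Proof. by []. Qed.
Lemma RV_ball (x : RV) (e : R) : ball x e = ball (x : V) e%:C.
Proof.
rewrite -!ball_normE /ball_; apply/seteqP; split => y /=;
by rewrite RV_normE -ltcR -rnormE.
Qed.

Lemma RV_nbhs (x : RV) : nbhs x = nbhs (x : V).
Proof.
apply/funext => P; apply/propext; rewrite !nbhs_ballP; split.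
    case=> e e0 H; exists e%:C; first by rewrite /= ltcE /= eqxx.
  by rewrite -RV_ball.
case=> e /= e0 H; have [ee e0r] := posC _ e0; exists (complex.Re e) => //.
by rewrite RV_ball -ee.
Qed.
Lemma RV_complete (F : set_system RV) : ProperFilter F -> cauchy F -> cvg F.
Proof.
move=> FF /cauchy_ballP HF.
have HV : cauchy_ball (F : set_system V).
  move=> e e0; have [ee e0r] := posC _ e0.
  have := HF _ e0r; apply: filterS => -[a b] /=.
  by rewrite RV_ball -ee.
have /cauchy_ballP /cauchy_cvg := HV.
move=> /cvg_ex [l Hl]; apply/cvg_ex; exists (l : RV).
by move=> P; rewrite /= RV_nbhs => /Hl.
Qed.
HB.instance Definition _ := Uniform_isComplete.Build RV RV_complete.

End Realif.
Arguments RV {R}.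
Arguments rnorm {R V}.
Lemma cont_transfer (R : realType) (V W : completeNormedModType R[i]) (f : V -> W) :
  continuous (f : RV V -> RV W) -> continuous f.
Proof.
move=> h x P; rewrite -RV_nbhs => /h.
by rewrite /= RV_nbhs.
Qed.

Section CGT.
Variable R : realType.
Variables (V W : completeNormedModType R) (T : V -> W).
Hypothesis TD : forall x y, T (x + y) = T x + T y.
Hypothesis TZ : forall (r : R) x, T (r *: x) = r *: T x.

Lemma baire_step : exists n (x0 : V) (r : R), 0 < r /\
  forall z, `|x0 - z| < r -> forall eps, 0 < eps ->
    exists s, `|T s| <= n%:R /\ `|z - s| < eps.
Proof.
pose S (n : nat) := [set x : V | `|T x| <= n%:R].
pose O n := ~` closure (S n).
have Hnot : ~ (forall i, open (O i) /\ dense (O i)).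
  move=> H; have := Baire H => /(_ setT).
  case; [by exists 0 | exact: openT |] => x [_ Hx].
  apply: (Hx (truncn `|T x|).+1 I); apply: subset_closure.
  by rewrite /S /=; apply: ltW; rewrite truncnS_gt.
have [i Hi] : exists i, ~ dense (O i).
  apply: NNPP => H; apply: Hnot => i; split.
    exact/closed_openC/closed_closure.
  by apply: NNPP => Hd; apply: H; exists i.
have [Q0 [ [x0 Hx0] HO] ] := denseNE Hi.
have /nbhs_ballP [r r0 Hr] : nbhs x0 Q0 by apply: open_nbhs_nbhs.
exists i, x0, r; split => // z zr eps eps0.
have Oz : Q0 z by apply: Hr; rewrite -ball_normE.
have cz : closure (S i) z.
  apply: NNPP => ncz.
  have : (Q0 `&` O i) z by [].
  by rewrite HO.
have [s [Ss Bs]] := cz (ball z eps) (nbhsx_ballx _ _ eps0).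
by exists s; split => //; move: Bs; rewrite -ball_normE.
Qed.
Lemma T0 : T 0 = 0.
Proof. have h := TD 0 0; rewrite addr0 in h; by apply: (addrI (T 0)); rewrite addr0 -h. Qed.
Lemma TN x : T (- x) = - T x.
Proof. by apply/eqP; rewrite -addr_eq0 -TD addNr T0. Qed.
Lemma TB x y : T (x - y) = T x - T y.
Proof. by rewrite TD TN. Qed.

Lemma approx_step : exists M : R, 0 <= M /\
  forall z eps, 0 < eps -> exists s, `|T s| <= M * `|z| /\ `|z - s| < eps.
Proof.
have [n [x0 [r [r0 Hb]]]] := baire_step.
have H1 w : `|w| < r -> forall eps, 0 < eps ->
    exists s, `|T s| <= 2 * n%:R /\ `|w - s| < eps.
  move=> wr eps eps0.
  have e2 : 0 < eps / 2 by rewrite divr_gt0.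
  have h1 : `|x0 - (x0 + w)| < r by rewrite opprD addrA subrr sub0r normrN.
  have h2 : `|x0 - x0| < r by rewrite subrr normr0.
  have [s1 [Ts1 Hs1]] := Hb (x0 + w) h1 _ e2.
  have [s2 [Ts2 Hs2]] := Hb x0 h2 _ e2.
  exists (s1 - s2); split.
    by rewrite TB (le_trans (ler_normB _ _)) // mulr2n mulrDl mul1r lerD.
  have -> : w - (s1 - s2) = (x0 + w - s1) - (x0 - s2).
    by rewrite -[x0 + w - s1]addrA (addrC x0 (w - s1)) addrKA opprK addrAC opprB addrA.
  apply: (le_lt_trans (ler_normB _ _)).
  by rewrite [eps]splitr ltrD.
exists (4 * n%:R / r); split; first by apply: divr_ge0; [apply: mulr_ge0 | apply: ltW].
move=> z eps eps0.
have [->|z0] := eqVneq z 0.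
  by exists 0; rewrite T0 !normr0 mulr0 subrr normr0.
have nz0 : 0 < `|z| by rewrite normr_gt0.
pose k := r / (2 * `|z|).
have k0 : 0 < k by rewrite divr_gt0 // mulr_gt0.
have wr : `|k *: z| < r.
  have -> : `|k *: z| = r / 2.
    rewrite normrZ gtr0_norm // /k; field; rewrite gt_eqF //.
  lra.
have [s' [Ts' Hs']] := H1 _ wr (k * eps) (mulr_gt0 k0 eps0).
exists (k^-1 *: s'); split.
  rewrite TZ normrZ gtr0_norm ?invr_gt0 //.
  apply: (le_trans (ler_wpM2l _ Ts')); first by rewrite invr_ge0 ltW.
  rewrite /k invf_div; rewrite le_eqVlt; apply/orP; left; apply/eqP.
  by field; rewrite gt_eqF.
have -> : z - k^-1 *: s' = k^-1 *: (k *: z - s').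
  by rewrite scalerBr scalerA mulVf ?gt_eqF // scale1r.
rewrite normrZ gtr0_norm ?invr_gt0 // -(ltr_pM2l k0) mulrA mulfV ?gt_eqF // mul1r.
exact: Hs'.
Qed.
Hypothesis Tcl : forall (v : nat -> V) (y : W),
  v @ \oo --> 0 -> (fun n => T (v n)) @ \oo --> y -> y = 0.

Lemma bound_aff : exists M : R, 0 <= M /\ forall z, `|T z| <= M * `|z| + M.
Proof.
have [M [M0 HM]] := approx_step.
exists M; split => // z.
pose h : R := 2^-1.
have h0 : 0 < h by rewrite invr_gt0.
have /choice [g Hg] : forall p : V * nat, exists s,
    `|T s| <= M * `|p.1| /\ `|p.1 - s| < h ^+ p.2.+1.
  by move=> [x k]; apply: HM; rewrite exprn_gt0.
pose fix zs k := if k is k'.+1 then zs k' - g (zs k', k') else z.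
have zsS k : zs k.+1 = zs k - g (zs k, k) by [].
have zsb k : `|zs k.+1| < h ^+ k.+1 by rewrite zsS; exact: (Hg (zs k, k)).2.
pose u k := T (g (zs k, k)).
have ub k : `|u k| <= M * `|zs k| := (Hg (zs k, k)).1.
have su N : series u N = T (z - zs N).
  elim: N => [|N IH]; first by rewrite /series /= big_geq // subrr T0.
  rewrite seriesSr IH zsS /u -TD; congr T.
  by rewrite opprB addrA addrAC.
pose nu := [normed series u].
have nuS N : nu N.+1 = nu N + `|u N| by rewrite /nu /= seriesSr.
have nu0 : nu 0%N = 0 by rewrite /nu /= /series /= big_geq.
have nb N : nu N.+1 <= M * `|z| + M * (1 - h ^+ N).
  elim: N => [|N IH].
    by rewrite nuS nu0 add0r expr0 subrr mulr0 addr0; exact: (ub 0%N).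
  rewrite nuS; apply: (le_trans (lerD IH (ub N.+1))).
  have := zsb N; rewrite exprS => hb.
  have : M * `|zs N.+1| <= M * (h * h ^+ N) by apply: ler_wpM2l => //; exact: ltW.
  rewrite /h; move: (h ^+ N) => a; lra.
have nbb N : nu N <= M * `|z| + M.
  case: N => [|N]; first by rewrite nu0 addr_ge0 // mulr_ge0.
  apply: (le_trans (nb N)); rewrite lerD2l ler_piMr // lerBlDr lerDl.
  by rewrite exprn_ge0 // ltW.
have cnu : cvgn nu.
  apply: nondecreasing_is_cvgn.
    by apply: nondecreasing_series => k _ _; exact: normr_ge0.
  by exists (M * `|z| + M) => _ [n _ <-]; exact: nbb n.
have cs : cvgn (series u) := normed_cvg cnu.
set y := limn (series u) in cs.
have Tz : T z = y.
  apply/eqP; rewrite eq_sym -subr_eq0; apply/eqP.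
  apply: (Tcl (fun n => - zs n)).
    apply/cvgrPdist_lt => e e0.
    have hlt : `|h| < 1 by rewrite ger0_norm ?ltW // invf_lt1 // ltr1n.
    have G : \forall t \near \oo, `|0 - geometric 1 h t| < e.
      by move/cvgrPdist_lt : (@cvg_geometric R 1 h hlt) => /(_ e e0).
    near=> n.
    have n1 : (0 < n)%N by near: n; exists 1%N.
    rewrite sub0r opprK.
    have := zsb n.-1; rewrite prednK // => /lt_le_trans; apply.
    near: n; apply: filterS G => n.
    rewrite sub0r normrN /geometric /= mul1r ger0_norm; [exact: ltW | apply: exprn_ge0; exact: ltW].
  have -> : (fun n => T (- zs n)) = (fun n => series u n - T z).
    by apply/funext => n; rewrite su TB addrC addKr TN.
  by apply: cvgB => //; exact: cvg_cst.
rewrite Tz; apply: (le_trans (lim_series_norm cnu)).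
by apply: limr_le => //; near=> n; exact: nbb.
Unshelve. all: by end_near. Qed.
Lemma cgt_bound : exists M : R, 0 <= M /\ forall z, `|T z| <= M * `|z|.
Proof.
have [M [M0 HM]] := bound_aff.
exists (M + M); split => [|z]; first by rewrite addr_ge0.
have [->|z0] := eqVneq z 0; first by rewrite T0 !normr0 mulr0.
have nz : 0 < `|z| by rewrite normr_gt0.
have nw : normr ((normr z)^-1 *: z) = 1 by rewrite normrZ normfV normr_id mulVf ?gt_eqF.
have Hw := HM (`|z|^-1 *: z); rewrite nw mulr1 in Hw.
have -> : T z = `|z| *: T (`|z|^-1 *: z) by rewrite -TZ scalerA mulfV ?gt_eqF // scale1r.
by rewrite normrZ normr_id mulrC; apply: ler_wpM2r => //; exact: ltW.
Qed.

Lemma cgt_cont : continuous T.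
Proof.
have [M [M0 HM]] := cgt_bound.
move=> x; apply/cvgrPdist_lt => e e0.
have d0 : 0 < e / (M + 1) by rewrite divr_gt0 // ltr_wpDl.
apply/nbhs_ballP; exists (e / (M + 1)) => // y; rewrite -ball_normE /= => hy.
rewrite -TB; apply: (le_lt_trans (HM _)).
have M1 : 0 < M + 1 by rewrite ltr_wpDl.
apply: (@le_lt_trans _ _ ((M + 1) * `|x - y|)).
  by apply: ler_wpM2r => //; rewrite lerDl.
by rewrite -ltr_pdivlMl // mulrC.
Qed.
End CGT.


Definition nrm {R : realType} {V : completeNormedModType R[i]} (x : V) : R :=
  complex.Re `|x|.

Lemma gcgt (R : realType) (V W : completeNormedModType R[i]) (T : V -> W)
  (I : Type) (S : I -> W -> W) :
  (forall (c : R[i]) x y, T (c *: x + y) = c *: T x + T y) ->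
  (forall i x y, S i (x + y) = S i x + S i y) ->
  (forall i, exists K : R, forall w, nrm (S i w) <= K * nrm w) ->
  (forall w, (forall i, S i w = 0) -> w = 0) ->
  (forall i, exists L : R, forall v, nrm (S i (T v)) <= L * nrm v) ->
  continuous T.
Proof.
move=> Tlin Sadd Sb Sinj STb.
have TD : forall x y : RV V, (T (x + y) : RV W) = T x + T y.
  by move=> x y; have := Tlin 1 x y; rewrite !scale1r.
have T0 : T 0 = 0.
  have h := TD 0 0; rewrite addr0 in h; by apply: (addrI (T 0)); rewrite addr0 -h.
have TZ : forall (r : R) (x : RV V), (T (r *: x) : RV W) = r *: (T x : RV W).
  move=> r x; have h := Tlin r%:C x 0; rewrite addr0 in h; rewrite T0 addr0 in h; exact: h.
apply: cont_transfer.
apply: (@cgt_cont R (RV V) (RV W) T TD TZ).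
move=> v y v0 Tvy; apply: Sinj => i.
have [K HK] := Sb i; have [L HL] := STb i.
have S0 : S i 0 = 0.
  have h := Sadd i 0 0; rewrite addr0 in h; by apply: (addrI (S i 0)); rewrite addr0 -h.
have SB : forall x w, S i (x - w) = S i x - S i w.
  move=> x w; apply/eqP; rewrite eq_sym subr_eq -Sadd subrK //.
have K1 : 0 < `|K| + 1 by rewrite ltr_wpDl.
have L1 : 0 < `|L| + 1 by rewrite ltr_wpDl.
have c1 : (fun n => (S i (T (v n)) : RV W)) @ \oo --> (S i y : RV W).
  apply/cvgrPdist_lt => e e0.
  have e1 : 0 < e / (`|K| + 1) by rewrite divr_gt0.
  move/cvgrPdist_lt : Tvy => /(_ _ e1); apply: filterS => n hn.
  rewrite -SB; apply: (le_lt_trans (HK _)).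
  apply: (@le_lt_trans _ _ ((`|K| + 1) * nrm (y - T (v n)))).
    apply: ler_wpM2r; first by rewrite /nrm; exact: (normr_ge0 (y - T (v n) : RV W)).
    by rewrite (le_trans (ler_norm K)) // lerDl.
  by rewrite -ltr_pdivlMl // mulrC.
have c2 : (fun n => (S i (T (v n)) : RV W)) @ \oo --> (0 : RV W).
  apply/cvgrPdist_lt => e e0.
  have e1 : 0 < e / (`|L| + 1) by rewrite divr_gt0.
  move/cvgrPdist_lt : v0 => /(_ _ e1); apply: filterS => n hn.
  rewrite sub0r normrN; apply: (le_lt_trans (HL _)).
  rewrite sub0r normrN in hn.
  apply: (@le_lt_trans _ _ ((`|L| + 1) * nrm (v n))).
    apply: ler_wpM2r; first by rewrite /nrm; exact: (normr_ge0 (v n : RV V)).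
    by rewrite (le_trans (ler_norm L)) // lerDl.
  by rewrite -ltr_pdivlMl // mulrC.
exact: (cvg_unique _ c1 c2).
Qed.

Section NrmFacts.
Variable R : realType.
Definition nc (c : R[i]) : R := complex.Re `|c|.
Lemma ncE (c : R[i]) : `|c| = (nc c)%:C.
Proof. by rewrite /nc RRe_real // normr_real. Qed.
Lemma nc_ge0 c : 0 <= nc c.
Proof. by rewrite -lecR -ncE; exact: normr_ge0. Qed.

Variable V : completeNormedModType R[i].
Implicit Types x y : V.
Lemma nrmE x : `|x| = (nrm x)%:C.
Proof. by rewrite /nrm RRe_real // realE normr_ge0. Qed.
Lemma nrm_ge0 x : 0 <= nrm x.
Proof. by rewrite -lecR -nrmE; exact: normr_ge0. Qed.
Lemma nrmD x y : nrm (x + y) <= nrm x + nrm y.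
Proof. by rewrite -lecR rcD -!nrmE ler_normD. Qed.
Lemma nrmZ (c : R[i]) x : nrm (c *: x) = nc c * nrm x.
Proof. apply: complexI; by rewrite rcM -!nrmE -ncE normrZ. Qed.
Lemma nrmN x : nrm (- x) = nrm x.
Proof. by rewrite /nrm normrN. Qed.
Lemma nrmB x y : nrm (x - y) <= nrm x + nrm y.
Proof. by rewrite -(nrmN y) nrmD. Qed.
Lemma nrm0 : nrm (0 : V) = 0.
Proof. by rewrite /nrm normr0. Qed.
Lemma nrm_eq0 x : nrm x = 0 -> x = 0.
Proof. by move=> h; apply/eqP; rewrite -normr_eq0 nrmE h. Qed.
End NrmFacts.
Arguments nc {R}. Arguments ncE {R}. Arguments nc_ge0 {R}.
Arguments nrmE {R V}. Arguments nrm_ge0 {R V}. Arguments nrmD {R V}. Arguments nrmZ {R V}.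
Arguments nrmN {R V}. Arguments nrmB {R V}. Arguments nrm0 {R V}. Arguments nrm_eq0 {R V}.

Section Theta.
Variables (R : realType) (A : completeNormedModType R[i]) (mulA : A -> A -> A)
  (theta : A -> R[i]).
Hypothesis HA : is_banach_algebra mulA.
Hypothesis Hth : is_nonzero_character mulA theta.

Lemma mul0A b : mulA 0 b = 0.
Proof.
case: HA => _ [mZl _]; have := mZl 0 0 b; rewrite !scale0r; exact.
Qed.
Lemma mulA0 b : mulA b 0 = 0.
Proof.
case: HA => _ [_ [mZr _]]; have := mZr 0 b 0; rewrite !scale0r; exact.
Qed.
Lemma mulAN a x : mulA a (- x) = - mulA a x.
Proof.
case: HA => _ [_ [mZr _]]; have := mZr (-1) a x; rewrite !scaleN1r; exact.
Qed.
Lemma mulAB a x y : mulA a (x - y) = mulA a x - mulA a y.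
Proof. by case: HA => _ [_ [_ [_ [mDr _]]]]; rewrite mDr mulAN. Qed.
Lemma mulA_nrm a b : nrm (mulA a b) <= nrm a * nrm b.
Proof.
case: HA => _ [_ [_ [_ [_ mN]]]]; rewrite -lecR rcM -!nrmE; exact: mN.
Qed.

Lemma th0 : theta 0 = 0.
Proof.
case: Hth => tl _ _; have h := tl 1 0 0; rewrite scale1r addr0 mul1r in h.
by apply: (addrI (theta 0)); rewrite addr0 -h.
Qed.
Lemma thD x y : theta (x + y) = theta x + theta y.
Proof. by case: Hth => tl _ _; have := tl 1 x y; rewrite scale1r mul1r. Qed.
Lemma thZ c x : theta (c *: x) = c * theta x.
Proof. by case: Hth => tl _ _; have := tl c x 0; rewrite !addr0 th0 addr0. Qed.

Lemma theta_ne1 a : nrm a < 1 -> theta a != 1.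
Proof.
move=> a1; apply/negP => /eqP ta.
have [mAs [_ [_ [_ [mDr _]]]]] := HA.
have [_ tM _] := Hth.
pose pw := fun k => iter k (mulA a) a.
have pwS k : pw k.+1 = mulA a (pw k) by [].
have pwb k : nrm (pw k) <= nrm a ^+ k.+1.
  elim: k => [|k IH]; first by rewrite expr1.
  rewrite pwS exprS; apply: (le_trans (mulA_nrm _ _)).
  by apply: ler_wpM2l => //; exact: nrm_ge0.
have cs : cvgn (series (pw : nat -> RV A)).
  apply: normed_cvg.
  apply: (@series_le_cvg R _ (geometric (nrm a) (nrm a))).
  - by move=> n; exact: normr_ge0.
  - by move=> n; rewrite /geometric /=; apply: mulr_ge0; [exact: nrm_ge0 | apply: exprn_ge0; exact: nrm_ge0].
  - by move=> n; rewrite /geometric /= -exprS; exact: (pwb n).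
  - by apply: is_cvg_geometric_series; rewrite ger0_norm //; exact: nrm_ge0.
set s := limn (series (pw : nat -> RV A)) in cs.
have sS N : series (pw : nat -> RV A) N.+1 = (a : RV A) + mulA a (series (pw : nat -> RV A) N).
  elim: N => [|N IH].
    by rewrite seriesSr /series /= big_geq // add0r mulA0 addr0.
  rewrite [LHS]seriesSr [in LHS]IH pwS -addrA -mDr; congr (_ + mulA a _); by rewrite seriesSr.
have lim1 : (fun N => series (pw : nat -> RV A) N.+1) @ \oo --> s.
  by have := cs; rewrite -cvg_shiftS.
have lim2 : (fun N => (a : RV A) + mulA a (series (pw : nat -> RV A) N)) @ \oo --> ((a : RV A) + mulA a s).
  apply: cvgD; first exact: cvg_cst.
  apply/cvgrPdist_lt => e e0.
  have na0 := nrm_ge0 a.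
  have e1 : 0 < e / (nrm a + 1) by rewrite divr_gt0 // ltr_wpDl.
  move/cvgrPdist_lt: cs => /(_ _ e1); apply: filterS => n hn.
  rewrite -mulAB; apply: (le_lt_trans (mulA_nrm _ _)).
  have hn' : nrm (s - series (pw : nat -> RV A) n) < e / (nrm a + 1) by [].
  rewrite ltr_pdivlMr ?ltr_wpDl // in hn'.
  have := nrm_ge0 (s - series (pw : nat -> RV A) n).
  nra.
have seq : s = (a : RV A) + mulA a s.
  have E : (fun N => series (pw : nat -> RV A) N.+1) = (fun N => (a : RV A) + mulA a (series (pw : nat -> RV A) N)).
    by apply/funext => N; rewrite sS.
  rewrite E in lim1; exact: (cvg_unique _ lim1 lim2).
have := congr1 theta seq; rewrite thD tM ta mul1r => h.
have : (1 : R[i]) = 0 by apply: (addIr (theta s)); rewrite add0r -h.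
by move/eqP; rewrite oner_eq0.
Qed.

Lemma theta_bound a : nc (theta a) <= nrm a.
Proof.
rewrite leNgt; apply/negP => h.
have nc0 : 0 < nc (theta a) := le_lt_trans (nrm_ge0 a) h.
have t0 : theta a != 0.
  by apply/eqP => t0; move: nc0; rewrite t0 /nc normr0 /= ltxx.
have ncV : nc (theta a)^-1 = (nc (theta a))^-1.
  by apply: complexI; rewrite -ncE normfV ncE fmorphV.
have := @theta_ne1 ((theta a)^-1 *: a).
rewrite thZ mulVf // eqxx => /implyP; rewrite implybF => /negP; apply.
by rewrite nrmZ ncV mulrC ltr_pdivrMr // mul1r.
Qed.
End Theta.

Lemma add_lemmas (V W : zmodType) (f : V -> W) :
  (forall x y, f (x + y) = f x + f y) ->
  f 0 = 0 /\ (forall x y, f (x - y) = f x - f y).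
Proof.
move=> fD.
have f0 : f 0 = 0.
  have h := fD 0 0; rewrite addr0 in h; by apply: (addrI (f 0)); rewrite addr0 -h.
have fN x : f (- x) = - f x.
  by apply/eqP; rewrite -addr_eq0 -fD addNr f0.
by split => // x y; rewrite fD fN.
Qed.

Lemma bnd_helper (R : realType) (X : completeNormedModType R[i]) (c : R[i]) (x y : X) (na : R) :
  nc c <= na -> nrm y <= na * nrm x -> nrm (c *: x - y) <= (2 * nrm x) * na.
Proof.
move=> hc hy; apply: (le_trans (nrmB _ _)); rewrite nrmZ.
have := ler_wpM2r (nrm_ge0 x) hc; lra.
Qed.

Section Main.
Variables (R : realType) (A U : completeNormedModType R[i])
  (mulA : A -> A -> A) (mulU : U -> U -> U) (theta : A -> R[i])
  (X : completeNormedModType R[i])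
  (lact : A * U -> X -> X) (ract : X -> A * U -> X).
Hypothesis HA : is_banach_algebra mulA.
Hypothesis HU : is_banach_algebra mulU.
Hypothesis Hth : is_nonzero_character mulA theta.
Hypothesis HX : is_lau_banach_bimodule mulA mulU theta lact ract.
Variable D : A * U -> X.
Hypothesis HD : is_lau_derivation mulA mulU theta lact ract D.

Lemma ladd p x y : lact p (x + y) = lact p x + lact p y.
Proof. by case: HX => _ [lR _]; have := lR 1 p x y; rewrite !scale1r. Qed.
Lemma radd p x y : ract (x + y) p = ract x p + ract y p.
Proof. by case: HX => _ [_ [_ [rR _]]]; have := rR 1 p x y; rewrite !scale1r. Qed.
Lemma lbn p x : nrm (lact p x) <= (nrm p.1 + nrm p.2) * nrm x.
Proof.
case: HX => _ [_ [_ [_ [_ [_ [_ [lb _]]]]]]].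
by rewrite -lecR rcM rcD -!nrmE; exact: lb.
Qed.
Lemma rbn p x : nrm (ract x p) <= (nrm p.1 + nrm p.2) * nrm x.
Proof.
case: HX => _ [_ [_ [_ [_ [_ [_ [_ rb]]]]]]].
by rewrite -lecR rcM rcD -!nrmE; exact: rb.
Qed.

Lemma D0 : D (0, 0) = 0.
Proof.
case: HD => Dl _; have h := Dl 1 (0, 0) (0, 0).
rewrite /lau_lc /= !scaler0 !addr0 scale1r in h.
by apply: (addrI (D (0, 0))); rewrite addr0 -h.
Qed.
Lemma d1lin c x y : D (c *: x + y, 0) = c *: D (x, 0) + D (y, 0).
Proof.
by case: HD => Dl _; have := Dl c (x, 0) (y, 0); rewrite /lau_lc /= !scaler0 !addr0.
Qed.
Lemma d2lin c x y : D (0, c *: x + y) = c *: D (0, x) + D (0, y).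
Proof.
by case: HD => Dl _; have := Dl c (0, x) (0, y); rewrite /lau_lc /= !scaler0 !addr0.
Qed.
Lemma d2Z c x : D (0, c *: x) = c *: D (0, x).
Proof. by have := d2lin c x 0; rewrite !addr0 D0 addr0. Qed.
Lemma Dsplit a u : D (a, u) = D (a, 0) + D (0, u).
Proof.
by case: HD => Dl _; have := Dl 1 (a, 0) (0, u); rewrite /lau_lc /= !scale1r addr0 add0r.
Qed.

Lemma mul_a0_0u a u : lau_mul mulA mulU theta (a, 0) (0, u) = (0, theta a *: u).
Proof.
rewrite /lau_mul /= mulA0 // scaler0 addr0 mul0A // addr0; congr (_, _).
Qed.
Lemma mul_0u_a0 a u : lau_mul mulA mulU theta (0, u) (a, 0) = (0, theta a *: u).
Proof.
by rewrite /lau_mul /= mul0A // scaler0 add0r mulA0 // addr0.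
Qed.

Lemma I1 a u : ract (D (a, 0)) (0, u) = theta a *: D (0, u) - lact (a, 0) (D (0, u)).
Proof.
case: HD => _ Dm; have h := Dm (a, 0) (0, u).
by rewrite mul_a0_0u d2Z in h; rewrite h addrK.
Qed.
Lemma I2 a u : lact (0, u) (D (a, 0)) = theta a *: D (0, u) - ract (D (0, u)) (a, 0).
Proof.
case: HD => _ Dm; have h := Dm (0, u) (a, 0).
by rewrite mul_0u_a0 d2Z in h; rewrite h addrC addKr.
Qed.


Lemma d1_cont_from (I : Type) (S : I -> X -> X) :
  (forall i x y, S i (x + y) = S i x + S i y) ->
  (forall i, exists K : R, forall w, nrm (S i w) <= K * nrm w) ->
  (forall w, (forall i, S i w = 0) -> w = 0) ->
  (forall i, exists L : R, forall a, nrm (S i (D (a, 0))) <= L * nrm a) ->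
  continuous (fun a : A => D (a, 0)).
Proof.
move=> Sadd Sb Sinj STb; apply: (@gcgt R A X _ I S) => //.
by move=> c x y; rewrite d1lin.
Qed.

Lemma d1_cont_ann : (forall x : X, ann_X_U lact ract x -> x = 0) ->
  continuous (fun a : A => D (a, 0)).
Proof.
move=> Hann.
apply: (@d1_cont_from (U * bool)
  (fun p w => if p.2 then ract w (0, p.1) else lact (0, p.1) w)).
- by move=> [u []] x y /=; [rewrite radd | rewrite ladd].
- move=> [u []]; exists (nrm (0 : A) + nrm u) => w /=; [exact: rbn | exact: lbn].
- move=> w H; apply: Hann => u; split; [exact: (H (u, false)) | exact: (H (u, true))].
- move=> [u []] /=; exists (2 * nrm (D (0, u))) => a.
    rewrite I1; apply: bnd_helper; first exact: (@theta_bound _ _ _ _ HA Hth).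
    by apply: (le_trans (lbn _ _)); rewrite /= nrm0 addr0.
  rewrite I2; apply: bnd_helper; first exact: (@theta_bound _ _ _ _ HA Hth).
  by apply: (le_trans (rbn _ _)); rewrite /= nrm0 addr0.
Qed.


Lemma d1_cont_lbai : has_left_bai_for_X lact -> continuous (fun a : A => D (a, 0)).
Proof.
move=> [I [le [e [[_ refl _ _] _ He]]]].
apply: (@d1_cont_from I (fun i w => lact (0, e i) w)).
- by move=> i x y; exact: ladd.
- by move=> i; exists (nrm (0 : A) + nrm (e i)) => w; exact: lbn.
- move=> w H; apply/eqP; apply: contraT => w0.
  have [i0 Hi] := He w `|w| (eq_ind_r is_true w0 (normr_gt0 w)).
  by have := Hi i0 (refl i0); rewrite H sub0r normrN ltxx.
- move=> i; exists (2 * nrm (D (0, e i))) => a.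
  rewrite I2; apply: bnd_helper; first exact: (@theta_bound _ _ _ _ HA Hth).
  by apply: (le_trans (rbn _ _)); rewrite /= nrm0 addr0.
Qed.

Lemma d1_cont_rbai : has_right_bai_for_X ract -> continuous (fun a : A => D (a, 0)).
Proof.
move=> [I [le [e [[_ refl _ _] _ He]]]].
apply: (@d1_cont_from I (fun i w => ract w (0, e i))).
- by move=> i x y; exact: radd.
- by move=> i; exists (nrm (0 : A) + nrm (e i)) => w; exact: rbn.
- move=> w H; apply/eqP; apply: contraT => w0.
  have [i0 Hi] := He w `|w| (eq_ind_r is_true w0 (normr_gt0 w)).
  by have := Hi i0 (refl i0); rewrite H sub0r normrN ltxx.
- move=> i; exists (2 * nrm (D (0, e i))) => a.
  rewrite I1; apply: bnd_helper; first exact: (@theta_bound _ _ _ _ HA Hth).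
  by apply: (le_trans (lbn _ _)); rewrite /= nrm0 addr0.
Qed.

Lemma d2_cont_Z : (forall x : X, Z_X_A lact ract x -> x = 0) ->
  continuous (fun u : U => D (0, u)).
Proof.
move=> HZ.
apply: (@gcgt R U X _ A (fun a w => lact (a, 0) w - ract w (a, 0))).
- by move=> c x y; exact: d2lin.
- by move=> a x y; rewrite ladd radd opprD addrACA.
- move=> a; exists (2 * nrm a) => w.
  apply: (le_trans (nrmB _ _)).
  have := lbn (a, 0) w; have := rbn (a, 0) w; rewrite /= nrm0 addr0; lra.
- move=> w H; apply: HZ => a; apply/eqP; rewrite -subr_eq0; apply/eqP; exact: H a.
- move=> a; exists (2 * nrm (D (a, 0))) => u.
  have e1 : lact (a, 0) (D (0, u)) = theta a *: D (0, u) - ract (D (a, 0)) (0, u).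
    by rewrite I1 opprB subrKC.
  have e2 : ract (D (0, u)) (a, 0) = theta a *: D (0, u) - lact (0, u) (D (a, 0)).
    by rewrite I2 opprB subrKC.
  rewrite e1 e2 opprB addrC addrA subrK.
  apply: (le_trans (nrmB _ _)).
  have := lbn (0, u) (D (a, 0)); have := rbn (0, u) (D (a, 0)); rewrite /= nrm0 add0r; lra.
Qed.

Lemma D_cont : continuous (fun a : A => D (a, 0)) -> continuous (fun u : U => D (0, u)) ->
  continuous D.
Proof.
move=> c1 c2.
have -> : D = (fun p => D (p.1, 0) + D (0, p.2)).
  by apply/funext => -[a u]; rewrite Dsplit.
move=> p; apply: continuousD.
  apply: (@continuous_comp _ _ _ fst (fun a : A => D (a, 0))); last exact: c1.
  exact: cvg_fst.
apply: (@continuous_comp _ _ _ snd (fun u : U => D (0, u))); last exact: c2.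
exact: cvg_snd.
Qed.
End Main.

Theorem theorem2p6 (R : realType)
  (A U : completeNormedModType R[i])
  (mulA : A -> A -> A) (mulU : U -> U -> U) (theta : A -> R[i])
  (X : completeNormedModType R[i])
  (lact : A * U -> X -> X) (ract : X -> A * U -> X) :
  is_banach_algebra mulA ->
  is_banach_algebra mulU ->
  is_nonzero_character mulA theta ->
  is_lau_banach_bimodule mulA mulU theta lact ract ->
  (forall D : A * U -> X,
     is_lau_derivation mulA mulU theta lact ract D ->
     (* (i) *)
     ((forall x : X, ann_X_U lact ract x -> x = 0)
        \/ has_left_bai_for_X lact
        \/ has_right_bai_for_X ract ->
      continuous (fun a : A => D (a, 0))) /\
     (* (ii), first part *)
     ((forall x : X, Z_X_A lact ract x -> x = 0) ->
      continuous (fun u : U => D (0, u)))) /\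
  (* (ii), second part: every derivation is continuous *)
  ((forall x : X, Z_X_A lact ract x -> x = 0) ->
   (forall x : X, ann_X_U lact ract x -> x = 0) ->
   forall D : A * U -> X,
     is_lau_derivation mulA mulU theta lact ract D -> continuous D).
Proof.
move=> HA HU Hth HX; split.
  move=> D HD; split.
    case=> [Hann|[Hl|Hr]].
    - exact: (@d1_cont_ann _ _ _ _ _ _ _ _ _ HA HU Hth HX D HD Hann).
    - exact: (@d1_cont_lbai _ _ _ _ _ _ _ _ _ HA HU Hth HX D HD Hl).
    - exact: (@d1_cont_rbai _ _ _ _ _ _ _ _ _ HA HU Hth HX D HD Hr).
  by move=> HZ; exact: (@d2_cont_Z _ _ _ _ _ _ _ _ _ HA HU HX D HD HZ).
move=> HZ Hann D HD.
exact: (@D_cont _ _ _ _ _ _ _ _ _ D HD (@d1_cont_ann _ _ _ _ _ _ _ _ _ HA HU Hth HX D HD Hann) (@d2_cont_Z _ _ _ _ _ _ _ _ _ HA HU HX D HD HZ)).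
Qed.
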